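(* Let $k$ be a Calder\'on--Zygmund kernel of order $m$ on a closed set $X\subset\mathbb{R}^d$ with constants $C_{CZ},\tau$, $\mu$ a finite measure supported in $X$, and $T$ a bounded operator on $L^2(\mathbb{R}^d;\mu)$ with $Tf(x)=\int k(x,y)f(y)\,d\mu(y)$ for $x\notin\operatorname{supp}f$. Let $\alpha=\frac{\tau}{2(\tau+m)}$. Let $Q,R$ be cubes in $\mathbb{R}^d$ with $\ell(Q)\le\ell(R)$, and $\varphi_Q,\psi_R\in L^2(\mathbb{R}^d;\mu)$ with $\varphi_Q=0$ outside $Q$, $\psi_R=0$ outside $R$, $\int\varphi_Q\,d\mu=0$, and $\operatorname{dist}(Q,\operatorname{supp}\psi_R)\ge\ell(Q)^\alpha\ell(R)^{1-\alpha}$. Then $$\Big|\int\varphi_Q\,T\psi_R\,d\mu\Big|\le C\frac{\ell(Q)^{\tau/2}\ell(R)^{\tau/2}}{D(Q,R)^{m+\tau}}\sqrt{\mu(Q)}\sqrt{\mu(R)}\,\|\varphi_Q\|_{L^2(\mu)}\|\psi_R\|_{L^2(\mu)},$$ where $D(Q,R)=\ell(Q)+\ell(R)+\operatorname{dist}(Q,R)$ and $C$ depends only on $C_{CZ},\tau,m,d$.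
   Context: A Calder\'on--Zygmund kernel of order $m$ on $X$ with constants $C_{CZ},\tau\in(0,1]$: $|k(x,y)|\le C_{CZ}|x-y|^{-m}$ and $|k(y,x)-k(y,x')|+|k(x,y)-k(x',y)|\le C_{CZ}|x-x'|^\tau/|x-y|^{m+\tau}$ for $x,x',y\in X$ with $|x-x'|\le\frac12|x-y|$. $\ell(\cdot)$ is side length. The cubes $Q$ and $R$ themselves may intersect. *)

(* Defs.v *)
From HB Require Import structures.
From mathcomp Require Import all_boot all_order all_algebra.
From mathcomp Require Import all_classical all_reals all_analysis.
Set Implicit Arguments. Unset Strict Implicit. Unset Printing Implicit Defensive.
Import Order.TTheory GRing.Theory Num.Theory.
Import numFieldNormedType.Exports.
Local Open Scope classical_set_scope.
Local Open Scope ring_scope.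

Definition Rd (R : realType) (d : nat) :=
  g_sigma_algebraType (@open 'rV[R]_d).

Definition enorm (R : realType) (d : nat) (x : 'rV[R]_d) : R :=
  Num.sqrt (\sum_(i < d) x ord0 i ^+ 2).

(* Distance between two sets (in \bar R; +oo if one of them is empty). *)
Definition setdist (R : realType) (d : nat) (A B : set 'rV[R]_d) : \bar R :=
  ereal_inf [set (enorm (a - b))%:E | a in A & b in B].

Definition fsupp (R : realType) (d : nat) (f : 'rV[R]_d -> R) : set 'rV[R]_d :=
  closure [set x | f x != 0].

(* Q is a cube with corner a and side length l: it contains the open
   cube prod_i (a_i, a_i + l) and is contained in the closed one
   (any choice of boundary faces is allowed). *)
Definition is_cube (R : realType) (d : nat) (Q : set 'rV[R]_d)
    (a : 'rV[R]_d) (l : R) : Prop :=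
  0 < l /\
  [set x : 'rV[R]_d | forall i, a ord0 i < x ord0 i < a ord0 i + l] `<=` Q /\
  Q `<=` [set x : 'rV[R]_d | forall i, a ord0 i <= x ord0 i <= a ord0 i + l].

Definition CZ_kernel (R : realType) (d : nat) (X : set 'rV[R]_d)
    (m Ccz tau : R) (k : 'rV[R]_d -> 'rV[R]_d -> R) : Prop :=
  (forall x y, X x -> X y -> x != y ->
     `|k x y| <= Ccz * powR (enorm (x - y)) (- m)) /\
  (forall x x' y, X x -> X x' -> X y -> x != y ->
     enorm (x - x') <= 2^-1 * enorm (x - y) ->
     `|k y x - k y x'| + `|k x y - k x' y|
       <= Ccz * powR (enorm (x - x')) tau / powR (enorm (x - y)) (m + tau)).

Definition L2 (R : realType) (d : nat) (mu : {measure set (Rd R d) -> \bar R})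
    (f : Rd R d -> R) : Prop :=
  measurable_fun setT f /\ (Lnorm mu 2%:E (EFin \o f) < +oo)%E.

Definition L2norm (R : realType) (d : nat) (mu : {measure set (Rd R d) -> \bar R})
    (f : Rd R d -> R) : R := fine (Lnorm mu 2%:E (EFin \o f)).

(* T is a bounded linear operator on L^2(mu), acting on representatives
   and compatible with mu-a.e. equality. *)
Definition bounded_op_L2 (R : realType) (d : nat)
    (mu : {measure set (Rd R d) -> \bar R})
    (T : (Rd R d -> R) -> (Rd R d -> R)) : Prop :=
  (forall f, L2 mu f -> L2 mu (T f)) /\
  (forall f g, L2 mu f -> L2 mu g ->
     {ae mu, forall x, f x = g x} -> {ae mu, forall x, T f x = T g x}) /\
  (forall f g, L2 mu f -> L2 mu g ->
     {ae mu, forall x, T (f \+ g) x = T f x + T g x}) /\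
  (forall (c : R) f, L2 mu f ->
     {ae mu, forall x, T (fun y => c * f y) x = c * T f x}) /\
  (exists M : R, forall f, L2 mu f -> L2norm mu (T f) <= M * L2norm mu f).

(* Main.v *)
Require Import Defs.
From HB Require Import structures.
From mathcomp Require Import all_boot all_order all_algebra.
From mathcomp Require Import all_classical all_reals all_analysis.
From mathcomp Require Import ring lra.
From mathcomp Require Import measurable_realfun.
Import Order.TTheory GRing.Theory Num.Theory.
Import numFieldNormedType.Exports.
Local Open Scope classical_set_scope.
Local Open Scope ring_scope.
Set Implicit Arguments. Unset Strict Implicit. Unset Printing Implicit Defensive.

Section geo.
Variable R : realType.

Lemma powK1 (lQ lR tau p : R) : 0 < lQ -> 0 < lR -> 0 < p ->
  lQ `^ (tau/2) * lR `^ p =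
  lR `^ (tau/2) * (lQ `^ (tau/(2 * p)) * lR `^ (1 - tau/(2 * p))) `^ p.
Proof.
move=> hQ hR hp.
rewrite powRM ?powR_ge0 // -!powRrM.
have e1 : tau / (2 * p) * p = tau / 2 by field; rewrite gt_eqF.
have e2 : p = tau/2 + (1 - tau / (2 * p)) * p by field; rewrite gt_eqF.
rewrite e1 {1}e2 powRD; last by rewrite (gt_eqF hR) implybT.
ring.
Qed.
Lemma powR_le (a b r : R) : 0 <= r -> 0 <= a -> a <= b -> a `^ r <= b `^ r.
Proof.
move=> r0 a0 ab; apply: (ge0_ler_powR r0) => //; rewrite nnegrE //.
exact: le_trans ab.
Qed.

Lemma keyb (lQ lR tau p rho : R) : 0 < lQ -> lQ <= lR -> 0 < tau -> 0 < p ->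
  lQ `^ (tau/(2 * p)) * lR `^ (1 - tau/(2 * p)) <= rho ->
  lQ `^ tau / rho `^ p <=
  3 `^ p * (lQ `^ (tau/2) * lR `^ (tau/2)) / (2 * lR + rho) `^ p.
Proof.
move=> hQ hQR ht hp hd.
have hR : 0 < lR by apply: lt_le_trans hQR.
have d0 : 0 < lQ `^ (tau/(2 * p)) * lR `^ (1 - tau/(2 * p)).
  by rewrite mulr_gt0 // powR_gt0.
have r0 : 0 < rho by apply: lt_le_trans hd.
have H : lQ `^ (tau/2) * (2 * lR + rho) `^ p <= 3 `^ p * (lR `^ (tau/2) * rho `^ p).
  have [rR|rR] := leP lR rho.
  - have h1 : (2 * lR + rho) `^ p <= 3 `^ p * rho `^ p.
      rewrite -powRM //; last by lra.
      apply: powR_le; lra.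
    have h2 : lQ `^ (tau/2) <= lR `^ (tau/2) by apply: powR_le; lra.
    rewrite mulrCA; apply: ler_pM => //; by rewrite ?powR_ge0.
  - have h1 : (2 * lR + rho) `^ p <= 3 `^ p * lR `^ p.
      rewrite -powRM //; last by lra.
      apply: powR_le; lra.
    have h2 : lQ `^ (tau/2) * lR `^ p <= lR `^ (tau/2) * rho `^ p.
      rewrite powK1 //; apply: ler_wpM2l; first exact: powR_ge0.
      apply: powR_le; lra.
    apply: le_trans (_ : lQ `^ (tau/2) * (3 `^ p * lR `^ p) <= _).
      by apply: ler_wpM2l => //; exact: powR_ge0.
    rewrite mulrCA; apply: ler_wpM2l => //; exact: powR_ge0.
have e : lQ `^ tau = lQ `^ (tau/2) * lQ `^ (tau/2).
  by rewrite -powRD ?(gt_eqF hQ) ?implybT // -splitr.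
have p1 : 0 < rho `^ p by rewrite powR_gt0.
have p2 : 0 < (2 * lR + rho) `^ p by rewrite powR_gt0 //; lra.
rewrite ler_pdivrMr // mulrAC ler_pdivlMr // e.
have := ler_wpM2l (powR_ge0 lQ (tau/2)) H.
move=> h; rewrite -mulrA; apply: (le_trans h); rewrite le_eqVlt; apply/orP; left; apply/eqP; ring.
Qed.
Lemma div_le (a b c : R) : 0 <= a -> 0 < b -> b <= c -> a / c <= a / b.
Proof.
move=> a0 b0 bc; apply: ler_wpM2l => //.
by rewrite lef_pV2 // posrE //; apply: lt_le_trans bc.
Qed.

Lemma powR_ge1 (a r : R) : 1 <= a -> 0 <= r -> 1 <= a `^ r.
Proof. by move=> a1 r0; rewrite -(powRr0 a); apply: ler_powR. Qed.

Lemma le_ring (a b c d : R) : a = c -> d = b -> c <= d -> a <= b.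
Proof. by move=> -> ->. Qed.

Lemma geo (m tau Ccz lQ lR N s r r' dist0 kxy kcy : R) :
  0 < m -> 0 < tau -> 0 < Ccz -> 0 < lQ -> lQ <= lR -> 1 <= N ->
  0 <= s -> s <= N * lQ ->
  lQ `^ (tau / (2 * (tau + m))) * lR `^ (1 - tau / (2 * (tau + m))) <= r ->
  lQ `^ (tau / (2 * (tau + m))) * lR `^ (1 - tau / (2 * (tau + m))) <= r' ->
  0 <= dist0 -> dist0 <= r ->
  (s <= 2^-1 * r -> `|kxy - kcy| <= Ccz * s `^ tau / r `^ (m + tau)) ->
  `|kxy| <= Ccz * r `^ (- m) -> `|kcy| <= Ccz * r' `^ (- m) ->
  `|kxy - kcy| <= (2 * Ccz * (2 * (1 + N)) `^ tau * 3 `^ (m + tau)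
       * (2 * (1 + N)) `^ (m + tau))
     * (lQ `^ (tau/2) * lR `^ (tau/2)) / (lQ + lR + dist0) `^ (m + tau).
Proof.
move=> hm ht hC hQ hQR hN hs0 hsN.
rewrite [tau + m]addrC.
set P := m + tau; set dl := _ * _ => hdr hdr' hd0 hdr0 hA hx hc.
set W := 2 * (1 + N).
have hP : 0 < P by rewrite /P; lra.
have hR : 0 < lR by apply: lt_le_trans hQR.
have d0 : 0 < dl by rewrite mulr_gt0 // powR_gt0.
have r0 : 0 < r by apply: lt_le_trans hdr.
have r0' : 0 < r' by apply: lt_le_trans hdr'.
have hN0 : 0 <= N by lra.
have hN2 : 0 <= 2 * N by lra.
have hN1 : 0 <= 1 + N by lra.
have hQ0 : 0 <= lQ by lra.
have hC0 : 0 <= Ccz by lra.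
have hC2 : 0 <= 2 * Ccz by lra.
have hD0 : 0 < lQ + lR + dist0 by lra.
have hDr : lQ + lR + dist0 <= 2 * lR + r by lra.
have hLd : 0 < 2 * lR + dl by lra.
have W1 : 1 <= W by rewrite /W; lra.
have NW : N <= W by rewrite /W; lra.
have NW2 : 2 * N <= W by rewrite /W; lra.
have NW1 : 1 + N <= W by rewrite /W; lra.
have hP0 := ltW hP.
have ht0 := ltW ht.
have G0 : 0 <= lQ `^ (tau/2) * lR `^ (tau/2) by rewrite mulr_ge0 // powR_ge0.
set G' := lQ `^ (tau/2) * lR `^ (tau/2).
set Dp := (lQ + lR + dist0) `^ P.
have Dp0 : 0 < Dp by rewrite powR_gt0.
have WP : 1 <= W `^ P by apply: powR_ge1.
have WT : 0 <= W `^ tau by apply: powR_ge0.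
have T3 : 0 <= 3 `^ P by apply: powR_ge0.
have GD : 0 <= G' / Dp by rewrite divr_ge0 // ltW.
rewrite -mulrA.
have [sA|sB] := leP s (2^-1 * r).
- have A1 : s `^ tau <= N `^ tau * lQ `^ tau.
    rewrite -powRM //; exact: powR_le ht0 hs0 hsN.
  have A2 : `|kxy - kcy| <= Ccz * N `^ tau * (lQ `^ tau / r `^ P).
    apply: le_trans (hA sA) _.
    rewrite -!mulrA; apply: ler_wpM2l => //.
    rewrite !mulrA; apply: ler_wpM2r; first by rewrite invr_ge0 powR_ge0.
    exact: A1.
  have A3 : lQ `^ tau / r `^ P <= 3 `^ P * G' / (2 * lR + r) `^ P.
    exact: keyb hQ hQR ht hP hdr.
  have A4 : 3 `^ P * G' / (2 * lR + r) `^ P <= 3 `^ P * G' / Dp.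
    apply: div_le => //; first by rewrite mulr_ge0.
    exact: powR_le hP0 (ltW hD0) hDr.
  apply: (le_trans A2).
  apply: le_trans (_ : Ccz * N `^ tau * (3 `^ P * G' / Dp) <= _).
    apply: ler_wpM2l; first by rewrite mulr_ge0 ?powR_ge0.
    exact: le_trans A3 A4.
  have h0 : N `^ tau <= W `^ tau by exact: powR_le ht0 hN0 NW.
  have h2 : W `^ tau <= W `^ tau * W `^ P.
    by rewrite -{1}(mulr1 (W `^ tau)); apply: ler_wpM2l.
  have h3 : 0 <= W `^ tau * W `^ P by rewrite mulr_ge0 // powR_ge0.
  have h1 : N `^ tau <= W `^ tau * W `^ P + W `^ tau * W `^ P.
    exact: ler_wpDl h3 (le_trans h0 h2).
  have c0 := mulr_ge0 (mulr_ge0 hC0 T3) GD.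
  have h := ler_wpM2l c0 h1.
  by apply: (le_ring _ _ h); rewrite /G'; ring.
- have rN : r < 2 * N * lQ by clear -sB hsN; lra.
  have B1 : `|kxy - kcy| <= 2 * Ccz * dl `^ (- m).
    apply: le_trans (ler_normB _ _) _.
    have e1 : r `^ (- m) <= dl `^ (- m).
      rewrite !powRN lef_pV2 ?posrE ?powR_gt0 //.
      exact: powR_le (ltW hm) (ltW d0) hdr.
    have e2 : r' `^ (- m) <= dl `^ (- m).
      rewrite !powRN lef_pV2 ?posrE ?powR_gt0 //.
      exact: powR_le (ltW hm) (ltW d0) hdr'.
    have f1 := ler_wpM2l hC0 e1.
    have f2 := ler_wpM2l hC0 e2.
    have f3 : Ccz * dl `^ (- m) + Ccz * dl `^ (- m) = 2 * Ccz * dl `^ (- m).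
      by ring.
    rewrite -f3; exact: lerD (le_trans hx f1) (le_trans hc f2).
  have B2 : dl `^ (- m) = dl `^ tau / dl `^ P.
    rewrite -powRB ?(gt_eqF d0) ?implybT //.
    have -> : tau - P = - m by rewrite /P; ring.
    by [].
  have B3 : dl `^ tau <= (2 * N) `^ tau * lQ `^ tau.
    rewrite -powRM //; apply: powR_le ht0 (ltW d0) _.
    exact: le_trans hdr (ltW rN).
  have B4 : lQ `^ tau / dl `^ P <= 3 `^ P * G' / (2 * lR + dl) `^ P.
    exact: keyb hQ hQR ht hP (lexx dl).
  have B5 : Dp <= (1 + N) `^ P * (2 * lR + dl) `^ P.
    rewrite -powRM //; last exact: ltW.
    apply: powR_le hP0 (ltW hD0) _.
    have f1 : N * lQ <= N * lR by apply: ler_wpM2l.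
    have f2 : 0 <= N * dl by apply: mulr_ge0; lra.
    have f3 : (1 + N) * (2 * lR + dl) = 2 * lR + dl + 2 * (N * lR) + N * dl.
      by ring.
    have f4 : 2 * N * lQ = 2 * (N * lQ) by ring.
    rewrite f3; clear -f1 f2 f4 hdr0 rN hQR d0; lra.
  have q0 : 0 < (2 * lR + dl) `^ P by rewrite powR_gt0.
  have B6 : ((2 * lR + dl) `^ P)^-1 <= (1 + N) `^ P / Dp.
    have iq : 0 <= ((2 * lR + dl) `^ P)^-1 by rewrite invr_ge0 ltW.
    have h := ler_wpM2l iq B5.
    rewrite ler_pdivlMr //; apply: le_trans h _.
    by rewrite mulrCA mulVf ?gt_eqF // mulr1.
  have e7 : 0 <= 3 `^ P * G' by rewrite mulr_ge0.
  have B8 : lQ `^ tau / dl `^ P <= 3 `^ P * G' * ((1 + N) `^ P / Dp).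
    by apply: (le_trans B4); apply: ler_wpM2l.
  have e5 : 0 <= (2 * N) `^ tau by apply: powR_ge0.
  have c1 : dl `^ (- m) <= (2 * N) `^ tau * (3 `^ P * G' * ((1 + N) `^ P / Dp)).
    rewrite B2; apply: le_trans (ler_wpM2l e5 B8).
    rewrite mulrA; apply: ler_wpM2r; first by rewrite invr_ge0 powR_ge0.
    exact: B3.
  have c2 : (2 * N) `^ tau * (3 `^ P * G' * ((1 + N) `^ P / Dp))
      <= W `^ tau * (3 `^ P * G' * (W `^ P / Dp)).
    apply: ler_pM => //.
    - by apply: mulr_ge0 => //; rewrite divr_ge0 ?powR_ge0 // ltW.
    - exact: powR_le ht0 hN2 NW2.
    apply: ler_wpM2l => //; apply: ler_wpM2r; first by rewrite invr_ge0 ltW.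
    exact: powR_le hP0 hN1 NW1.
  have h := ler_wpM2l hC2 (le_trans c1 c2).
  apply: (le_trans B1); apply: (le_ring _ _ h); rewrite /G'; ring.
Qed.
End geo.


Section nullext.
Context d (T : measurableType d) (R : realType) (mu : {measure set T -> \bar R}).
Local Open Scope ereal_scope.
Import HBNNSimple.

Lemma ge0_null_le (N : set T) (f g : T -> \bar R) : measurable N -> mu N = 0 ->
  (forall x, 0 <= f x) -> (forall x, 0 <= g x) ->
  (forall x, ~ N x -> f x = g x) -> \int[mu]_x f x <= \int[mu]_x g x.
Proof.
move=> mN N0 f0 g0 fg.
rewrite (ge0_integralTE _ f0) (ge0_integralTE _ g0).
apply: ge_ereal_sup => _ [h /= hf <-].
have mCN : measurable (~` N) by exact: measurableC.
pose h' := proj_nnsfun h mCN.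
apply: ereal_sup_ubound => /=; exists h'.
  move=> x; rewrite /h' /= /measurable_realfun.mindic indicE.
  have [xN|xN] := boolP (x \in ~` N).
    rewrite mulr1 -fg; [exact: hf|by move: xN; rewrite inE].
  by rewrite mulr0 g0.
rewrite -!integralT_nnsfun.
have mh : measurable_fun [set: T] (EFin \o h).
  by apply/measurable_EFinP; exact: measurable_funPT.
have mh' : measurable_fun [set: T] (EFin \o h').
  by apply/measurable_EFinP; exact: measurable_funPT.
rewrite (ge0_negligible_integral _ _ _ _ N0) //; last by move=> x _; rewrite lee_fin.
rewrite [RHS](ge0_negligible_integral _ _ _ _ N0) //; last by move=> x _; rewrite lee_fin.
apply: eq_integral => x; rewrite inE => -[_ xN].
by rewrite /h' /= /measurable_realfun.mindic indicE mem_set // mulr1.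
Qed.

Lemma null_ext_integral (N : set T) (f g : T -> \bar R) : measurable N -> mu N = 0 ->
  (forall x, ~ N x -> f x = g x) -> \int[mu]_x f x = \int[mu]_x g x.
Proof.
move=> mN N0 fg.
rewrite (integralE _ _ f) (integralE _ _ g).
have hp : forall x, ~ N x -> f^\+ x = g^\+ x by move=> x nx; rewrite !funeposE fg.
have hn : forall x, ~ N x -> f^\- x = g^\- x by move=> x nx; rewrite !funenegE fg.
have hp' : forall x, ~ N x -> g^\+ x = f^\+ x by move=> x nx; rewrite hp.
have hn' : forall x, ~ N x -> g^\- x = f^\- x by move=> x nx; rewrite hn.
congr (_ - _); apply/eqP; rewrite eq_le; apply/andP; split;
  apply: (ge0_null_le mN N0) => // x; exact: funepos_ge0 || exact: funeneg_ge0.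
Qed.

Lemma null_ext_Rintegral (N : set T) (f g : T -> R) : measurable N -> mu N = 0 ->
  (forall x, ~ N x -> f x = g x) -> (\int[mu]_x f x = \int[mu]_x g x)%R.
Proof.
move=> mN N0 fg; rewrite /Rintegral; congr fine.
by apply: (null_ext_integral mN N0) => x /fg ->.
Qed.
End nullext.


Section cs.
Context d (T : measurableType d) (R : realType) (mu : {measure set T -> \bar R}).

Lemma Lnorm2_indic (Q : set T) : measurable Q ->
  Lnorm mu 2%:E (EFin \o \1_Q) = (mu Q `^ (2^-1))%E.
Proof.
move=> mQ; rewrite unlock /=.
congr (_ `^ _)%E.
have := integral_indic mu measurableT mQ; rewrite setIT => <-.
apply: eq_integral => x _ /=; rewrite indicE.
by case: (x \in Q); rewrite /= ?normr1 ?normr0 ?powR1 ?powR0.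
Qed.

Lemma cs_bound (Q : set T) (f : T -> R) : measurable Q ->
  measurable_fun [set: T] f -> (forall x, ~ Q x -> f x = 0) ->
  (mu [set: T] < +oo)%E -> (Lnorm mu 2%:E (EFin \o f) < +oo)%E ->
  (\int[mu]_x (`|f x|)%:E <= (Num.sqrt (fine (mu Q)) * fine (Lnorm mu 2%:E (EFin \o f)))%:E)%E.
Proof.
move=> mQ mf f0 muT fL.
have mi : measurable_fun [set: T] (\1_Q : T -> R) by exact: measurable_indic.
have h := hoelder mu mf mi (ltr0n _ 2) (ltr0n _ 2) _.
have h2 : (2^-1 + 2^-1 = 1 :> R)%R by lra.
move: (h h2); rewrite Lnorm1 Lnorm2_indic //.
have e : (fun x => (`|(f \* \1_Q) x|)%:E) = (fun x => (`|f x|)%:E).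
  apply/funext => x /=; rewrite indicE.
  by have [xQ|xQ] := boolP (x \in Q); rewrite ?mulr1 // mulr0 f0 ?normr0 //; move: xQ; rewrite notin_setE.
have e2 : (\int[mu]_x `|(EFin \o (f \* \1_Q)%R) x| = \int[mu]_x (`|f x|)%:E)%E.
  by apply: eq_integral => x _; rewrite /= -(congr1 (fun g => g x) e).
rewrite e2.
have fQ : (mu Q \is a fin_num)%E.
  rewrite ge0_fin_numE ?measure_ge0 //.
  apply: le_lt_trans muT; apply: le_measure; rewrite ?inE //.
have fN : (Lnorm mu 2%:E (EFin \o f) \is a fin_num)%E.
  by rewrite ge0_fin_numE ?Lnorm_ge0.
rewrite -{1}(fineK fQ) -{1}(fineK fN) poweR_EFin powR12_sqrt ?fine_ge0 ?measure_ge0 //.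
by rewrite -EFinM mulrC.
Qed.

End cs.


Section en.
Variables (R : realType) (d : nat).
Implicit Types (v x y : 'rV[R]_d).

Lemma enorm_ge0 v : 0 <= enorm v.
Proof. exact: sqrtr_ge0. Qed.

Lemma enormB x y : enorm (x - y) = enorm (y - x).
Proof.
rewrite /enorm; congr Num.sqrt; apply: eq_bigr => i _.
by rewrite !mxE -opprB sqrrN.
Qed.

Lemma enorm0 : enorm (0 : 'rV[R]_d) = 0.
Proof.
rewrite /enorm (eq_bigr (fun _ => 0)); first by rewrite big1 // sqrtr0.
by move=> i _; rewrite mxE expr0n.
Qed.

Lemma enorm_coord v c : 0 <= c -> (forall i, `|v ord0 i| <= c) ->
  enorm v <= Num.sqrt d%:R * c.
Proof.
move=> c0 hc; rewrite /enorm -(ger0_norm c0) -sqrtr_sqr -sqrtrM ?ler0n //.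
rewrite ler_sqrt; last by rewrite mulr_ge0 ?ler0n ?sqr_ge0.
apply: le_trans (_ : \sum_(i < d) c ^+ 2 <= _).
  apply: ler_sum => i _; rewrite -real_normK ?num_real //.
  by rewrite !expr2; apply: ler_pM => //; exact: normr_ge0.
by rewrite sumr_const card_ord mulr_natl.
Qed.
Lemma cont_A (X A : set 'rV[R]_d) k m Ccz tau x d0 y eps :
  0 < Ccz -> 0 < tau -> 0 < m -> CZ_kernel X m Ccz tau k -> A `<=` X -> X x ->
  0 < d0 -> (forall y, A y -> d0 <= enorm (y - x)) -> A y -> 0 < eps ->
  exists2 eta, 0 < eta & forall y', A y' -> enorm (y - y') <= eta ->
    `|k x y - k x y'| < eps.
Proof.
move=> hC ht hm [_ cz2] AX Xx hd0 hA Ay he.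
set r := enorm (y - x).
have r0 : 0 < r by apply: lt_le_trans (hA _ Ay).
set p := m + tau.
have p0 : 0 < p by rewrite /p; lra.
set E := eps * r `^ p / (2 * Ccz).
have E0 : 0 < E by rewrite /E divr_gt0 ?mulr_gt0 ?powR_gt0 //; lra.
exists (Order.min (r / 2) (E `^ tau^-1)).
  by rewrite lt_min divr_gt0 ?powR_gt0.
move=> y' Ay' hy'.
have yx : y != x.
  apply/negP => /eqP yx; move: r0; rewrite /r yx subrr enorm0; lra.
have h1 : enorm (y - y') <= 2^-1 * r.
  by apply: le_trans hy' _; rewrite ge_min mulrC lexx.
have := cz2 y y' x (AX _ Ay) (AX _ Ay') Xx yx h1.
set s := enorm (y - y') => hcz.
have h2 : s `^ tau <= E.
  apply: le_trans (_ : (E `^ tau^-1) `^ tau <= E).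
    apply: powR_le; [lra|exact: enorm_ge0|].
    by apply: le_trans hy' _; rewrite ge_min lexx orbT.
  by rewrite -powRrM mulVf ?gt_eqF // powRr1 // ltW.
apply: le_lt_trans (_ : Ccz * s `^ tau / r `^ p < eps).
  apply: le_trans hcz; rewrite lerDl; exact: normr_ge0.
have rp : 0 < r `^ p by rewrite powR_gt0.
rewrite ltr_pdivrMr // -ltr_pdivlMl //.
apply: le_lt_trans h2 _.
rewrite /E; have a0 : 0 < eps * r `^ p by rewrite mulr_gt0.
move: (eps * r `^ p) a0 => a a0.
rewrite ltr_pdivrMr; last lra.
have -> : Ccz^-1 * a * (2 * Ccz) = 2 * a by field; rewrite gt_eqF.
lra.
Qed.

Lemma open_meas (U : set 'rV[R]_d) : open U -> measurable (U : set (Rd R d)).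
Proof. by move=> oU; apply: sub_sigma_algebra. Qed.

Lemma closed_meas (U : set 'rV[R]_d) : closed U -> measurable (U : set (Rd R d)).
Proof.
move=> cU; rewrite -(setCK U); apply: measurableC; apply: open_meas.
by rewrite openC.
Qed.

Lemma meas_kA (X A : set 'rV[R]_d) k m Ccz tau x d0 :
  (0 < d)%N -> 0 < Ccz -> 0 < tau -> 0 < m -> CZ_kernel X m Ccz tau k ->
  closed A -> A `<=` X -> X x ->
  0 < d0 -> (forall y, A y -> d0 <= enorm (y - x)) ->
  measurable_fun [set: Rd R d] (fun y : Rd R d => if y \in A then k x y else 0).
Proof.
move=> hd hC ht hm hcz cA AX Xx hd0 hA.
apply: (measurability _ (RGenOpens.measurableE R)).
move=> _ [_ [a [b ->]] <-].
set S := [set U : set 'rV[R]_d | open U /\ forall y', A y' -> U y' -> a < k x y' < b].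
set W := \bigcup_(U in S) U.
have oW : open W by apply: bigcup_open => U [].
set P := [set _ : 'rV[R]_d | a < 0 < b].
have mP : measurable (P : set (Rd R d)).
  have [h|h] := boolP (a < 0 < b).
    by rewrite (_ : P = setT) //; apply/seteqP; split.
  by rewrite (_ : P = set0) //; apply/seteqP; split => // z; rewrite /P /= (negbTE h).
have sqd : 0 < Num.sqrt (d%:R : R) by rewrite sqrtr_gt0 ltr0n.
have -> : [set: Rd R d] `&` (fun y : Rd R d => if y \in A then k x y else 0) @^-1` `]a, b[
    = (A `&` W) `|` (~` A `&` P).
  apply/seteqP; split => z.
  - rewrite /= in_itv /=; case: ifPn => [zA|zA] [_ hz]; last first.
      by right; split => //; move: zA; rewrite notin_setE.
    left; split; first by move: zA; rewrite inE.
    have zA' : A z by move: zA; rewrite inE.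
    have /andP[az zb] := hz.
    set eps := Order.min (k x z - a) (b - k x z).
    have e0 : 0 < eps by rewrite lt_min !subr_gt0 az zb.
    have [eta eta0 heta] := cont_A hC ht hm hcz AX Xx hd0 hA zA' e0.
    exists (ball z (eta / Num.sqrt d%:R)); last exact: ballxx (divr_gt0 eta0 sqd).
    split; first exact: ball_open.
    move=> y' Ay' zy'.
    have h1 : enorm (z - y') <= eta.
      have -> : eta = Num.sqrt d%:R * (eta / Num.sqrt d%:R).
        by rewrite mulrC -mulrA mulVf ?gt_eqF // mulr1.
      apply: enorm_coord; first by rewrite ltW // divr_gt0.
      move=> i; case: zy' => _ /(_ ord0 i); rewrite mxE.
      rewrite mxE => h; apply: ltW; move: h; rewrite -ball_normE /ball_ /=.
      by rewrite distrC.
    have := heta y' Ay' h1; rewrite ltr_distlC => /andP[h2 h3].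
    have e1 : eps <= k x z - a by rewrite ge_min lexx.
    have e2 : eps <= b - k x z by rewrite ge_min lexx orbT.
    apply/andP; split; lra.
  - case => [[Az [U [oU hU] Uz]]|[nAz Pz]]; split => //=; rewrite in_itv /=.
      by rewrite (mem_set Az); exact: hU.
    by rewrite memNset.
apply: measurableU; apply: measurableI => //.
- exact: closed_meas.
- exact: open_meas.
- by apply: measurableC; exact: closed_meas.
Qed.
End en.


Section h4.
Context d (T : measurableType d) (R : realType) (mu : {measure set T -> \bar R}).

Lemma fine_ub (e : \bar R) (r : R) : (0 <= e)%E -> (e <= r%:E)%E -> fine e <= r.
Proof. by case: e => [x| |] //=; rewrite lee_fin. Qed.

Lemma L2_int (Q : set T) (f : T -> R) : measurable Q ->
  measurable_fun [set: T] f -> (forall x, ~ Q x -> f x = 0) ->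
  (mu [set: T] < +oo)%E -> (Lnorm mu 2%:E (EFin \o f) < +oo)%E ->
  mu.-integrable [set: T] (EFin \o f) /\
  \int[mu]_x `|f x| <= Num.sqrt (fine (mu Q)) * fine (Lnorm mu 2%:E (EFin \o f)).
Proof.
move=> mQ mf f0 muT fL.
have h := cs_bound mQ mf f0 muT fL.
split.
  apply/integrableP; split; first exact/measurable_EFinP.
  by apply: le_lt_trans h _; rewrite ltry.
rewrite /Rintegral; apply: fine_ub h.
by apply: integral_ge0 => x _; rewrite lee_fin.
Qed.

Lemma ae_le_Rint (N : set T) (f g : T -> R) : measurable N -> mu N = 0 ->
  measurable_fun [set: T] f -> measurable_fun [set: T] g ->
  (forall x, 0 <= f x) -> (forall x, 0 <= g x) ->
  mu.-integrable [set: T] (EFin \o g) ->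
  (forall x, ~ N x -> f x <= g x) ->
  \int[mu]_x f x <= \int[mu]_x g x.
Proof.
move=> mN N0 mf mg f0 g0 ig fg.
have h : (\int[mu]_x (f x)%:E <= \int[mu]_x (g x)%:E)%E.
  apply: ae_ge0_le_integral => //.
  - by move=> x _; rewrite lee_fin.
  - exact/measurable_EFinP.
  - by move=> x _; rewrite lee_fin.
  - exact/measurable_EFinP.
  exists N; split => // x /= hx; apply: contrapT => nx; apply: hx => _.
  by rewrite lee_fin; exact: fg.
have fg' : (\int[mu]_x (g x)%:E)%E \is a fin_num.
  by apply: integrable_fin_num.
rewrite /Rintegral; apply: fine_ub; first by apply: integral_ge0 => x _; rewrite lee_fin.
by rewrite fineK.
Qed.
Lemma intB_R (f g : T -> R) : mu.-integrable [set: T] (EFin \o f) ->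
  mu.-integrable [set: T] (EFin \o g) ->
  mu.-integrable [set: T] (EFin \o (fun x => f x - g x)).
Proof.
move=> hf hg; have := integrableB measurableT hf hg.
by apply: eq_integrable => // x _; rewrite /= EFinB.
Qed.

Lemma intZ_R (c : R) (f : T -> R) : mu.-integrable [set: T] (EFin \o f) ->
  mu.-integrable [set: T] (EFin \o (fun x => c * f x)).
Proof.
move=> hf; have := integrableZl measurableT c hf.
by apply: eq_integrable => // x _; rewrite /= EFinM.
Qed.

Lemma intN_R (f : T -> R) : mu.-integrable [set: T] (EFin \o f) ->
  mu.-integrable [set: T] (EFin \o (fun x => `|f x|)).
Proof. exact: integrable_norm. Qed.

Lemma intle_R (f g : T -> R) : measurable_fun [set: T] f ->
  (forall x, `|f x| <= `|g x|) -> mu.-integrable [set: T] (EFin \o g) ->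
  mu.-integrable [set: T] (EFin \o f).
Proof.
move=> mf fg ig; apply: (le_integrable measurableT) ig.
  exact/measurable_EFinP.
by move=> x _ /=; rewrite lee_fin.
Qed.
End h4.


Unset Implicit Arguments. Set Strict Implicit.

Theorem lemma20 (R : realType) (d : nat) (m Ccz tau : R) :
  (0 < d)%N -> 0 < m -> 0 < Ccz -> 0 < tau <= 1 ->
  exists C : R, 0 < C /\
  forall (X : set 'rV[R]_d) (k : 'rV[R]_d -> 'rV[R]_d -> R)
    (mu : {measure set (Rd R d) -> \bar R})
    (T : (Rd R d -> R) -> (Rd R d -> R))
    (Q Rc : set (Rd R d)) (a b : 'rV[R]_d) (lQ lR : R)
    (phi psi : Rd R d -> R),
  closed X ->
  CZ_kernel X m Ccz tau k ->
  (mu setT < +oo)%E ->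
  mu (~` X) = 0%E ->
  bounded_op_L2 mu T ->
  (forall f, L2 mu f ->
     {ae mu, forall x, ~ fsupp f x ->
        T f x = Rintegral mu setT (fun y => k x y * f y)}) ->
  is_cube Q a lQ -> is_cube Rc b lR ->
  measurable Q -> measurable Rc ->
  lQ <= lR ->
  L2 mu phi -> L2 mu psi ->
  (forall x, ~ Q x -> phi x = 0) ->
  (forall x, ~ Rc x -> psi x = 0) ->
  Rintegral mu setT phi = 0 ->
  ((powR lQ (tau / (2 * (tau + m))) * powR lR (1 - tau / (2 * (tau + m))))%:E
     <= setdist Q (fsupp psi))%E ->
  `|Rintegral mu setT (fun x => phi x * T psi x)|
    <= C * (powR lQ (tau / 2) * powR lR (tau / 2))
         / powR (lQ + lR + fine (setdist Q Rc)) (m + tau)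
         * Num.sqrt (fine (mu Q)) * Num.sqrt (fine (mu Rc))
         * L2norm mu phi * L2norm mu psi.

Proof.
move=> hd hm hC /andP[ht ht1].
set N := Num.sqrt (d%:R : R).
set W := 2 * (1 + N).
have hN : 1 <= N.
  by rewrite /N -[X in X <= _]sqrtr1 ler_sqrt ?ler1n.
exists (2 * Ccz * W `^ tau * 3 `^ (m + tau) * W `^ (m + tau)).
split.
  by rewrite !mulr_gt0 ?powR_gt0 //; rewrite /W; lra.
move=> X k mu T Q Rc a b lQ lR phi psi cX hcz muT muX hTop hTk cQ cR mQ mR
  hQR Lphi Lpsi phi0 psi0 iphi hdist.
set dl := lQ `^ (tau / (2 * (tau + m))) * lR `^ (1 - tau / (2 * (tau + m))).
have hQ : 0 < lQ by case: cQ.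
have hR : 0 < lR by apply: lt_le_trans hQR.
have dl0 : 0 < dl by rewrite mulr_gt0 // powR_gt0.
set dist0 := fine (setdist Q Rc).
set B := 2 * Ccz * W `^ tau * 3 `^ (m + tau) * W `^ (m + tau)
  * (lQ `^ (tau / 2) * lR `^ (tau / 2)) / (lQ + lR + dist0) `^ (m + tau).
have Fsep : forall x y, Q x -> fsupp psi y -> dl <= enorm (x - y).
  move=> x y Qx Sy; rewrite -lee_fin; apply: le_trans hdist _.
  by apply: ereal_inf_lbound; exists x => //; exists y.
have Fnz : forall y, psi y != 0 -> fsupp psi y.
  by move=> y hy; apply: subset_closure.
have FQ : forall x, Q x -> ~ fsupp psi x.
  move=> x Qx Sx; have := Fsep x x Qx Sx; rewrite subrr enorm0; lra.
have sd0 : (0 <= setdist Q Rc)%E.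
  apply: le_ereal_inf_tmp => _ [x _ [y _ <-]]; rewrite lee_fin; exact: enorm_ge0.
have d00 : 0 <= dist0 by rewrite /dist0 fine_ge0.
have Fd0 : forall x y, Q x -> Rc y -> dist0 <= enorm (x - y).
  move=> x y Qx Ry.
  have h : (setdist Q Rc <= (enorm (x - y))%:E)%E.
    by apply: ereal_inf_lbound; exists x => //; exists y.
  move: sd0 h; rewrite /dist0; case: (setdist Q Rc) => [s _|_ _|] /=.
  - by rewrite lee_fin.
  - exact: enorm_ge0.
  - by [].
have Fcube : forall x c, Q x -> Q c -> enorm (x - c) <= N * lQ.
  move=> x c Qx Qc; apply: enorm_coord; first exact: ltW.
  move=> i; case: cQ => _ [_ sQ].
  have := sQ _ Qx i; have := sQ _ Qc i; rewrite !mxE => /andP[h1 h2] /andP[h3 h4].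
  rewrite ler_norml; apply/andP; split; lra.
have Fgeo : forall x c y, Q x -> Q c -> X x -> X c -> X y -> Rc y ->
    fsupp psi y -> `|k x y - k c y| <= B.
  move=> x c y Qx Qc Xx Xc Xy Ry Sy.
  have r1 := Fsep x y Qx Sy; have r2 := Fsep c y Qc Sy.
  have xy : x != y by apply/negP => /eqP e; move: r1; rewrite e subrr enorm0; lra.
  have cy : c != y by apply/negP => /eqP e; move: r2; rewrite e subrr enorm0; lra.
  apply: (geo hm ht hC hQ hQR hN (enorm_ge0 _) (Fcube _ _ Qx Qc) r1 r2 d00
    (Fd0 _ _ Qx Ry)).
  - move=> hs; have := hcz.2 x c y Xx Xc Xy xy hs.
    move=> h; apply: le_trans h; rewrite lerDr; exact: normr_ge0.
  - exact: hcz.1 x y Xx Xy xy.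
  - exact: hcz.1 c y Xc Xy cy.
have mX : measurable (X : set (Rd R d)) by exact: closed_meas.
have mCX : measurable (~` X : set (Rd R d)) by exact: measurableC.
have [iphiI Rphi] := L2_int mQ Lphi.1 phi0 muT Lphi.2.
have [ipsiI Rpsi] := L2_int mR Lpsi.1 psi0 muT Lpsi.2.
set A := X `&` fsupp psi.
have cA : closed A by apply: closedI => //; exact: closed_closure.
have AX : A `<=` X by move=> y [].
set g := fun x => \int[mu]_y (k x y * psi y).
set F := fun x (y : Rd R d) => (if y \in A then k x y else 0) * psi y.
have FgF : forall x, g x = \int[mu]_y F x y.
  move=> x; apply: (null_ext_Rintegral mCX muX) => y /= nXy.
  have Xy : X y := contrapT nXy.
  rewrite /F; case: ifPn => [_ //|yA].
  have [->|/Fnz Sy] := eqVneq (psi y) 0; first by rewrite !mulr0.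
  by exfalso; move: yA; rewrite notin_setE; apply; split.
have FM : forall x, Q x -> X x -> measurable_fun [set: Rd R d] (F x).
  move=> x Qx Xx; apply: measurable_funM; last exact: Lpsi.1.
  apply: (meas_kA hd hC ht hm hcz cA AX Xx dl0).
  by move=> y [_ Sy]; rewrite enormB; exact: Fsep.
have kb : forall x y, Q x -> X x -> A y -> `|k x y| <= Ccz * dl `^ (- m).
  move=> x y Qx Xx [Xy Sy].
  have r1 := Fsep x y Qx Sy.
  have r0 : 0 < enorm (x - y) := lt_le_trans dl0 r1.
  have xy : x != y by apply/negP => /eqP e; move: r0; rewrite e subrr enorm0 ltxx.
  apply: le_trans (hcz.1 x y Xx Xy xy) _.
  apply: ler_wpM2l; first lra.
  rewrite !powRN lef_pV2 ?posrE ?powR_gt0 //.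
  exact: powR_le (ltW hm) (ltW dl0) r1.
have FI : forall x, Q x -> X x -> mu.-integrable [set: Rd R d] (EFin \o F x).
  move=> x Qx Xx.
  apply: (intle_R (FM x Qx Xx) _ (intZ_R (Ccz * dl `^ (- m)) ipsiI)) => y.
  rewrite /F normrM [X in _ <= X]normrM; apply: ler_wpM2r; first exact: normr_ge0.
  case: ifPn => [/set_mem Ay|_]; last by rewrite normr0 normr_ge0.
  apply: le_trans (kb x y Qx Xx Ay) _; exact: ler_norm.
have B0 : 0 <= B.
  rewrite /B; apply: divr_ge0; last exact: powR_ge0.
  apply: mulr_ge0; last by apply: mulr_ge0; exact: powR_ge0.
  apply: mulr_ge0; last exact: powR_ge0.
  apply: mulr_ge0; last exact: powR_ge0.
  apply: mulr_ge0; last exact: powR_ge0.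
  lra.
have Fbound : forall x c, Q x -> X x -> Q c -> X c ->
    `|g x - g c| <= B * \int[mu]_y `|psi y|.
  move=> x c Qx Xx Qc Xc.
  rewrite !FgF -RintegralB //; [|exact: FI|exact: FI].
  have iD := intB_R (FI x Qx Xx) (FI c Qc Xc).
  apply: le_trans (le_normr_Rintegral measurableT iD) _.
  rewrite -RintegralZl //; last exact: intN_R.
  apply: le_Rintegral => //.
  - exact: intN_R.
  - exact: intZ_R (intN_R ipsiI).
  move=> y _; rewrite /F -mulrBl normrM.
  case: ifPn => [/set_mem [Xy Sy]|_]; last first.
    by rewrite subrr normr0 mul0r mulr_ge0 ?normr_ge0.
  have [->|psy] := eqVneq (psi y) 0; first by rewrite normr0 !mulr0.
  have Ry : Rc y by apply: contrapT => nR; move/eqP: psy; apply; exact: psi0.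
  apply: ler_wpM2r; first exact: normr_ge0.
  exact: Fgeo.
have L0phi : 0 <= L2norm mu phi by rewrite /L2norm fine_ge0 // Lnorm_ge0.
have L0psi : 0 <= L2norm mu psi by rewrite /L2norm fine_ge0 // Lnorm_ge0.
have RHS0 : 0 <= B * Num.sqrt (fine (mu Q)) * Num.sqrt (fine (mu Rc))
    * L2norm mu phi * L2norm mu psi.
  apply: mulr_ge0 => //; apply: mulr_ge0 => //; apply: mulr_ge0; last exact: sqrtr_ge0.
  apply: mulr_ge0 => //; exact: sqrtr_ge0.
have [[c [Qc Xc]]|noc] := pselect (exists c, Q c /\ X c); last first.
  have -> : \int[mu]_x (phi x * T psi x) = \int[mu]_x (0 : R).
    apply: (null_ext_Rintegral mCX muX) => x /= nXx.
    have Xx : X x := contrapT nXx.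
    rewrite phi0 ?mul0r // => Qx; apply: noc; by exists x.
  by rewrite Rintegral_cst // mul0r normr0.
set K := B * \int[mu]_y `|psi y|.
have K0 : 0 <= K by rewrite mulr_ge0 // Rintegral_ge0 // => y _; exact: normr_ge0.
have [NT [mNT NT0 hNT]] := hTk psi Lpsi.
have hae : forall x, ~ (NT `|` ~` X) x ->
    `|phi x * T psi x - g c * phi x| <= K * `|phi x|.
  move=> x hx.
  have nNT : ~ NT x by move=> h; apply: hx; left.
  have Xx : X x by apply: contrapT => h; apply: hx; right.
  have [Qx|nQx] := pselect (Q x); last first.
    by rewrite phi0 // !(mul0r, mulr0, subr0, normr0).
  have P : ~ fsupp psi x -> T psi x = g x.
    by apply: contrapT => h; apply: nNT; exact: hNT.
  rewrite (P (FQ x Qx)).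
  have -> : phi x * g x - g c * phi x = phi x * (g x - g c) by ring.
  rewrite normrM [K * _]mulrC; apply: ler_wpM2l; first exact: normr_ge0.
  exact: Fbound.
have mh0 : measurable_fun [set: Rd R d] (fun x => phi x * T psi x).
  by apply: measurable_funM; [exact: Lphi.1 | exact: (hTop.1 psi Lpsi).1].
have [fin|nfin] := boolP ((\int[mu]_x ((phi x * T psi x)%:E))%E \is a fin_num);
  last first.
  move: nfin; rewrite /Rintegral; case: (\int[mu]_x _)%E => [r| |] //= _.
  - by rewrite normr0.
  - by rewrite normr0.
have ih : mu.-integrable [set: Rd R d] (EFin \o (fun x => phi x * T psi x)).
  apply/integrableP; split; first exact/measurable_EFinP.
  by move: (integral_fin_num_abs mu measurableT mh0); rewrite fin.
have e1 : \int[mu]_x (phi x * T psi x)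
    = \int[mu]_x (phi x * T psi x - g c * phi x).
  rewrite RintegralB //; last exact: intZ_R.
  by rewrite RintegralZl // iphi mulr0 subr0.
rewrite e1.
apply: le_trans (le_normr_Rintegral measurableT (intB_R ih (intZ_R _ iphiI))) _.
apply: le_trans (_ : \int[mu]_x (K * `|phi x|) <= _).
  apply: (ae_le_Rint (N := NT `|` ~` X)).
  - exact: measurableU.
  - by rewrite measureU0 // NT0.
  - apply: measurableT_comp; first exact: normr_measurable.
    apply: measurable_funB => //; apply: measurable_funM => //.
    exact: Lphi.1.
  - apply: measurable_funM => //; apply: measurableT_comp.
      exact: normr_measurable.
    exact: Lphi.1.
  - by move=> x; exact: normr_ge0.
  - by move=> x; rewrite mulr_ge0 // normr_ge0.
  - exact: intZ_R (intN_R iphiI).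
  - exact: hae.
rewrite RintegralZl //; last exact: intN_R.
have Ip0 : 0 <= \int[mu]_y `|psi y| by rewrite Rintegral_ge0 // => y _; exact: normr_ge0.
have If0 : 0 <= \int[mu]_y `|phi y| by rewrite Rintegral_ge0 // => y _; exact: normr_ge0.
have h1 := ler_pM Ip0 If0 Rpsi Rphi.
have h2 := ler_wpM2l B0 h1.
  apply: (le_ring _ _ h2); first by rewrite /K -mulrA.
  rewrite /L2norm; ring.
Qed.
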